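(* Let $H$ be the adjacency matrix or the Laplacian matrix of an undirected weighted connected graph on vertices $1,\dots,n$, and suppose perfect state transfer from vertex $1$ to vertex $2$ occurs at time $t_0$, i.e. $|\langle 1|e^{it_0H}|2\rangle|=1$. Assume moreover that there exist $\theta\in\mathbb{R}$, an integer $0\le\ell\le n$, a real orthogonal matrix $\tilde Q$ and $\tilde D=\pi\,\mathrm{diag}(r_1,\dots,r_n)$ with $r_1\ge\cdots\ge r_\ell$ positive even integers and $r_{\ell+1}\ge\cdots\ge r_n$ positive odd integers, such that $t_0H=\tilde Q^T\tilde D\tilde Q+\theta I$ and the first two rows of $\tilde Q^T$ are $(x_1,\dots,x_n)$ and $(x_1,\dots,x_\ell,-x_{\ell+1},\dots,-x_n)$ with $x_1,\dots,x_n\ge 0$ (that is, such a decomposition exists with no trailing zero block). Let $H_0$ be a nonzero real symmetric $n\times n$ perturbation and $\hat H=t_0H+H_0$. Then, as $H_0\to 0$, \[ 1-|\langle 1|e^{i\hat H}|2\rangle|^2\ \le\ \frac{2\|H_0\|_F^2}{(\pi-\|H_0\|)^2}+\|H_0\|^2+O(\|H_0\|^3). \]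
   Context: $\|\cdot\|$ denotes the operator (spectral) norm and $\|\cdot\|_F$ the Frobenius norm. For a weighted graph with edge weights $w(j,k)$, the adjacency matrix $A$ has $(j,k)$ entry $w(j,k)$ if $j,k$ are adjacent and $0$ otherwise; the Laplacian is $L=R-A$ with $R$ the diagonal matrix of row sums of $A$. $\langle 1|M|2\rangle$ denotes the $(1,2)$ entry of a matrix $M$. *)

(* Defs.v *)
From HB Require Import structures.
From mathcomp Require Import all_boot all_order all_algebra.
From mathcomp Require Import all_classical all_reals all_analysis.
From mathcomp Require Import complex.

Set Implicit Arguments.
Unset Strict Implicit.
Unset Printing Implicit Defensive.

Import Order.TTheory GRing.Theory Num.Theory numFieldNormedType.Exports.
Local Open Scope ring_scope.
Local Open Scope classical_set_scope.

Section Defs.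
Variables (R : realType) (n : nat).

Definition cplx_mx (A : 'M[R]_n) : 'M[R[i]]_n :=
  map_mx (fun x : R => Complex x 0) A.

Definition expmi_partial (A : 'M[R]_n) (N : nat) : 'M[R[i]]_n :=
  \sum_(k < N) ((k`!)%:R)^-1 *: (Complex 0 1 *: cplx_mx A) ^+ k.

Definition expmi (A : 'M[R]_n) : 'M[R[i]]_n :=
  \matrix_(i, j) Complex (limn (fun N => @complex.Re R (expmi_partial A N i j)))
                         (limn (fun N => @complex.Im R (expmi_partial A N i j))).

Definition vnorm (v : 'cV[R]_n) : R := Num.sqrt (\sum_i v i 0 ^+ 2).

Definition frobenius (A : 'M[R]_n) : R :=
  Num.sqrt (\sum_i \sum_j A i j ^+ 2).

Definition opnorm (A : 'M[R]_n) : R :=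
  sup [set vnorm (A *m v) | v in [set v : 'cV[R]_n | vnorm v = 1]].

(** A is the adjacency matrix of an undirected weighted (simple) graph on
    vertex set 'I_n: symmetric, zero diagonal, nonnegative entries; j and k
    are adjacent iff A j k != 0 (i.e. the weight w(j,k) > 0). *)
Definition weighted_adjacency (A : 'M[R]_n) : Prop :=
  A^T = A /\ (forall i, A i i = 0) /\ (forall i j, 0 <= A i j).

Definition adj_connected (A : 'M[R]_n) : Prop :=
  forall j k : 'I_n, connect [rel a b | A a b != 0] j k.

Definition laplacian (A : 'M[R]_n) : 'M[R]_n :=
  diag_mx (\row_i \sum_j A i j) - A.

Definition cmod (z : R[i]) : R := ComplexField.Normc.normc z.

End Defs.

(* Main.v *)
Require Import Defs.
From HB Require Import structures.
From mathcomp Require Import all_boot all_order all_algebra.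
From mathcomp Require Import all_classical all_reals all_analysis.
From mathcomp Require Import complex.
From mathcomp Require Import ring lra.
Import Order.TTheory GRing.Theory Num.Theory numFieldNormedType.Exports.
Local Open Scope ring_scope.
Set Implicit Arguments.
Unset Strict Implicit.
Unset Printing Implicit Defensive.

Section A.
Local Open Scope sesquilinear_scope.
Variable R : realType.

Lemma mvt_abs (f df : R -> R) (L y : R) :
  (forall x : R, is_derive x (1:R) f (df x)) ->
  (forall c, `|c| <= `|y| -> `|df c| <= L) ->
  `|f y - f 0| <= L * `|y|.
Proof.
move=> hd hL.
have cf : continuous f.
  move=> x; apply/differentiable_continuous/derivable1_diffP.
  by apply: ex_derive; apply: hd.
have hd' a b : forall x : R, x \in `]a, b[%R -> is_derive x (1:R) f (df x) by move=> x _; exact: hd.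
have [y0|y0] := leP 0 y.
  have [c /andP[c0 cy] ->] := MVT_segment y0 (hd' 0 y) (continuous_subspaceT cf).
  rewrite normrM subr0 ler_wpM2r //; apply: hL.
  by rewrite !ger0_norm // (le_trans c0 cy).
have [c /andP[c0 cy] E] := MVT_segment (ltW y0) (hd' y 0) (continuous_subspaceT cf).
rewrite -normrN opprB E normrM sub0r normrN ler_wpM2r //; apply: hL.
rewrite ler0_norm ?(ltW y0) // ler0_norm ?lerN2 //.
by rewrite (le_trans _ (ltW y0)).
Qed.

Lemma sin_abs (y : R) : `|sin y| <= `|y|.
Proof.
have := @mvt_abs (@sin R) (@cos R) 1 y (fun x => is_derive_sin x).
by rewrite sin0 subr0 mul1r; apply => c _; exact: cos_max.
Qed.

Lemma cos_bound (y : R) : `|cos y - 1| <= y ^+ 2.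
Proof.
have := @mvt_abs (@cos R) (fun x => - sin x) `|y| y (fun x => is_derive_cos x).
rewrite cos0 -normrM -expr2 ger0_norm ?sqr_ge0 //; apply => c hc.
by rewrite normrN (le_trans (sin_abs c)).
Qed.

Lemma sin_bound (y : R) : `|sin y - y| <= `|y| ^+ 3.
Proof.
have hd : forall x : R, is_derive x (1:R) (fun x => sin x - x) (cos x - 1).
  move=> x; apply: is_deriveB.
have := @mvt_abs (fun x => sin x - x) (fun x => cos x - 1) (y ^+ 2) y hd.
rewrite sin0 !subr0 => H.
have -> : `|y| ^+ 3 = y ^+ 2 * `|y|.
  by rewrite -[y ^+ 2](@ger0_norm _ (y^+2)) ?sqr_ge0 // normrX exprS mulrC.
apply: H => c hc; apply: (le_trans (cos_bound c)).
rewrite -[c ^+ 2](@ger0_norm _ (c^+2)) ?sqr_ge0 // -[y ^+ 2](@ger0_norm _ (y^+2)) ?sqr_ge0 //.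
by rewrite !normrX ler_pXn2r // ?nnegrE.
Qed.
End A.

Section C.
Local Open Scope sesquilinear_scope.
Variable R : realType.
Variable n : nat.
Local Notation C := (R[i]).

Definition conjd (P : 'M[C]_n) (f : 'I_n -> C) : 'M[C]_n :=
  P^t* *m diag_mx (\row_j f j) *m P.

Lemma diag_mxM (f g : 'I_n -> C) :
  diag_mx (\row_j f j) *m diag_mx (\row_j g j) = diag_mx (\row_j (f j * g j)).
Proof.
apply/matrixP => i j; rewrite mul_diag_mx !mxE.
by case: (i == j); rewrite ?mulr1n ?mulr0n ?mulr0.
Qed.

Variable P : 'M[C]_n.
Hypothesis hP : P *m P^t* = 1%:M.
Hypothesis hP' : P^t* *m P = 1%:M.

Lemma conjd_ext f g : (forall j, f j = g j) -> conjd P f = conjd P g.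
Proof. by move=> H; rewrite /conjd (_ : \row_j f j = \row_j g j) //; apply/rowP => j; rewrite !mxE H. Qed.

Lemma conjdM f g : conjd P f *m conjd P g = conjd P (fun j => f j * g j).
Proof.
rewrite /conjd !mulmxA -[_ *m P *m P^t*]mulmxA hP mulmx1.
by rewrite -[_ *m diag_mx _ *m diag_mx _]mulmxA diag_mxM.
Qed.

Lemma conjd1 : conjd P (fun _ => 1) = 1%:M.
Proof.
rewrite /conjd (_ : diag_mx _ = 1%:M) ?mulmx1 ?hP' //.
by apply/matrixP => i j; rewrite !mxE.
Qed.

Lemma conjdX f k : (conjd P f) ^+ k = conjd P (fun j => f j ^+ k).
Proof.
elim: k => [|k IH].
  by rewrite expr0 (@conjd_ext _ (fun _ => 1)) ?conjd1 // => j; rewrite expr0.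
rewrite exprS IH -mulmxE conjdM; apply: conjd_ext => j; by rewrite exprS.
Qed.

Lemma conjdZ a f : a *: conjd P f = conjd P (fun j => a * f j).
Proof.
rewrite /conjd scalemxAl scalemxAr (_ : a *: diag_mx _ = diag_mx (\row_j (a * f j))) //.
by apply/matrixP => i j; rewrite !mxE mulrnAr.
Qed.

Lemma conjdD f g : conjd P f + conjd P g = conjd P (fun j => f j + g j).
Proof.
rewrite /conjd -mulmxDl -mulmxDr (_ : diag_mx _ + diag_mx _ = diag_mx (\row_j (f j + g j))) //.
by apply/matrixP => i j; rewrite !mxE mulrnDl.
Qed.

Lemma conjdN f : - conjd P f = conjd P (fun j => - f j).
Proof.
rewrite /conjd -mulNmx -mulmxN (_ : - diag_mx _ = diag_mx (\row_j (- f j))) //.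
by apply/matrixP => i j; rewrite !mxE mulNrn.
Qed.

Lemma conjd0 : conjd P (fun _ => 0) = 0.
Proof.
rewrite /conjd (_ : diag_mx _ = 0) ?mulmx0 ?mul0mx //.
by apply/matrixP => i j; rewrite !mxE mul0rn.
Qed.

Lemma conjd_sum (I : Type) (r : seq I) (f : I -> 'I_n -> C) :
  \sum_(k <- r) conjd P (f k) = conjd P (fun j => \sum_(k <- r) f k j).
Proof.
elim: r => [|a r IH].
  by rewrite big_nil -conjd0; apply: conjd_ext => j; rewrite big_nil.
rewrite big_cons IH conjdD; apply: conjd_ext => j; by rewrite big_cons.
Qed.

Lemma conjd_entry f a b :
  conjd P f a b = \sum_j (P j a)^* * P j b * f j.
Proof.
rewrite /conjd mxE; apply: eq_bigr => j _.
rewrite mul_mx_diag !mxE; ring.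
Qed.
End C.

Section Spec.
Local Open Scope sesquilinear_scope.
Variable R : realType.
Variable n : nat.
Local Notation C := (R[i]).
Variable M : 'M[R]_n.
Hypothesis hM : M^T = M.

Lemma cplx_herm : cplx_mx M \is hermsymmx.
Proof.
apply/is_hermitianmxP; rewrite expr0 scale1r.
apply/matrixP => i j; rewrite !mxE.
rewrite -{1}hM mxE; rewrite -[RHS]/(Complex (M j i) (-0)) oppr0 //.
Qed.

Definition Pm := spectralmx (cplx_mx M).
Definition dm := spectral_diag (cplx_mx M).

Lemma Pm_u : Pm *m Pm^t* = 1%:M.
Proof. exact/unitarymxP/spectral_unitarymx. Qed.

Lemma Pm_u' : Pm^t* *m Pm = 1%:M.
Proof. by rewrite -[Pm^t*]mul1mx mulmxKtV // spectral_unitarymx. Qed.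

Lemma Pm_spec : cplx_mx M = conjd Pm (fun j => dm 0 j).
Proof.
have /orthomx_spectralP -> := hermitian_normalmx cplx_herm.
rewrite invmx_unitary ?spectral_unitarymx // /conjd /Pm /dm.
by rewrite (_ : \row_j _ = spectral_diag (cplx_mx M)) //; apply/rowP => j; rewrite !mxE.
Qed.

Lemma dm_real j : dm 0 j = real_complex R (complex.Re (dm 0 j)).
Proof.
have := hermitian_spectral_diag_real cplx_herm.
by move=> /mxOverP /(_ 0 j) /RRe_real ->.
Qed.
End Spec.

Section Ser.
Local Open Scope sesquilinear_scope.
Variable R : realType.
Local Notation C := (R[i]).
Local Notation cR := (real_complex R).

Lemma ReRM (r : R) (w : C) : complex.Re (cR r * w) = r * complex.Re w.
Proof. by case: w => a b /=; ring. Qed.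
Lemma ImRM (r : R) (w : C) : complex.Im (cR r * w) = r * complex.Im w.
Proof. by case: w => a b /=; ring. Qed.

Lemma iX2 (x : R) : (Complex 0 x)^+2 = cR (- x^+2).
Proof. by rewrite expr2; apply/eqP; rewrite eq_complex /=; apply/andP; split; apply/eqP; ring. Qed.

Lemma iXk (x : R) k : (Complex 0 x)^+k = if odd k then Complex 0 ((-1)^+(k./2) * x^+k)
   else cR ((-1)^+(k./2) * x^+k).
Proof.
have [m [->|->]] : exists m, k = m.*2 \/ k = m.*2.+1.
  exists k./2; case h: (odd k); [right|left];
  by rewrite -{1}(odd_double_half k) h ?add1n ?add0n.
- rewrite odd_double doubleK -mul2n exprM iX2 -rmorphXn /=; congr (cR _).
  by rewrite exprM -[- x^+2]mulN1r exprMn.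
- have hh : uphalf m.*2 = m by exact: (half_bit_double m true).
  rewrite oddS odd_double /= hh exprS -mul2n exprM iX2 -rmorphXn /=.
  rewrite [x ^+ (2 * m).+1]exprS exprM -[- x^+2]mulN1r exprMn /real_complex_def.
  apply/eqP; rewrite eq_complex /=; apply/andP; split; apply/eqP; ring.
Qed.

Definition sN (x : R) (N : nat) : C := \sum_(k < N) ((k`!)%:R)^-1 * (Complex 0 x)^+k.

Lemma Re_sum (I : Type) (r : seq I) (f : I -> C) :
  complex.Re (\sum_(i <- r) f i) = \sum_(i <- r) complex.Re (f i).
Proof. by apply: (big_morph (@complex.Re R)) => // [[a b] [c d]]. Qed.
Lemma Im_sum (I : Type) (r : seq I) (f : I -> C) :
  complex.Im (\sum_(i <- r) f i) = \sum_(i <- r) complex.Im (f i).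
Proof. by apply: (big_morph (@complex.Im R)) => // [[a b] [c d]]. Qed.

Lemma invfact k : ((k`!)%:R : C)^-1 = cR ((k`!)%:R^-1).
Proof. by rewrite fmorphV rmorph_nat. Qed.

Lemma Re_sN x N : complex.Re (sN x N) = series (cos_coeff x) N.
Proof.
rewrite /sN Re_sum /series /= big_mkord; apply: eq_bigr => k _.
rewrite invfact ReRM iXk /cos_coeff /=.
case: (odd k) => /=; rewrite /real_complex_def /= -?exprnP; ring.
Qed.

Lemma Im_sN x N : complex.Im (sN x N) = series (sin_coeff x) N.
Proof.
rewrite /sN Im_sum /series /= big_mkord; apply: eq_bigr => k _.
rewrite invfact ImRM iXk /sin_coeff /=.
move: (nat_of_ord k) => {}k.
have [m [->|->]] : exists m, k = m.*2 \/ k = m.*2.+1.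
  exists k./2; case h: (odd k); [right|left];
  by rewrite -{1}(odd_double_half k) h ?add1n ?add0n.
  by rewrite odd_double /real_complex_def /=; ring.
have hh : uphalf m.*2 = m by exact: (half_bit_double m true).
rewrite oddS odd_double /= hh doubleK; ring.
Qed.
End Ser.

Section Expm.
Local Open Scope sesquilinear_scope.
Local Open Scope classical_set_scope.
Variable R : realType.
Variable n : nat.
Local Notation C := (R[i]).
Local Notation cR := (real_complex R).

Definition ce (x : R) : C := Complex (cos x) (sin x).

Lemma cReM (a b : C) : complex.Re (a * b) = complex.Re a * complex.Re b - complex.Im a * complex.Im b.
Proof. by case: a => ? ?; case: b => ? ?. Qed.
Lemma cImM (a b : C) : complex.Im (a * b) = complex.Re a * complex.Im b + complex.Im a * complex.Re b.
Proof. by case: a => ? ?; case: b => ? ?. Qed.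

Lemma cvg_lin2 (a b : R) (u v : nat -> R) (lu lv : R) :
  (u k @[k --> \oo]) --> lu -> (v k @[k --> \oo]) --> lv ->
  (a * u k - b * v k @[k --> \oo]) --> a * lu - b * lv.
Proof. move=> hu hv. apply: cvgB. apply: cvgMr. exact: hu. apply: cvgMr. exact hv. Qed.
Lemma cvg_lin2p (a b : R) (u v : nat -> R) (lu lv : R) :
  (u k @[k --> \oo]) --> lu -> (v k @[k --> \oo]) --> lv ->
  (a * u k + b * v k @[k --> \oo]) --> a * lu + b * lv.
Proof. move=> hu hv. apply: cvgD. apply: cvgMr. exact: hu. apply: cvgMr. exact hv. Qed.

Lemma cvg_bigsum (I : Type) (r : seq I) (f : I -> nat -> R) (l : I -> R) :
  (forall i, (f i k @[k --> \oo]) --> l i) ->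
  (\sum_(i <- r) f i k @[k --> \oo]) --> \sum_(i <- r) l i.
Proof.
move=> H; elim: r => [|a r IH].
  rewrite big_nil; under eq_fun do rewrite big_nil; exact: cvg_cst.
rewrite big_cons; under eq_fun do rewrite big_cons.
exact: cvgD.
Qed.

Lemma cvg_cos (x : R) : (series (cos_coeff x) k @[k --> \oo]) --> cos x.
Proof. rewrite cos.unlock; exact: is_cvg_series_cos_coeff. Qed.
Lemma cvg_sin (x : R) : (series (sin_coeff x) k @[k --> \oo]) --> sin x.
Proof. rewrite sin.unlock; exact: is_cvg_series_sin_coeff. Qed.

Variable M : 'M[R]_n.
Hypothesis hM : M^T = M.

Lemma expmi_partial_E N :
  expmi_partial M N = conjd (Pm M) (fun j => sN (complex.Re (dm M 0 j)) N).
Proof.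
rewrite /expmi_partial (Pm_spec hM) conjdZ.
under eq_bigr do rewrite conjdX ?Pm_u ?Pm_u' // conjdZ.
rewrite conjd_sum; apply: conjd_ext => j.
rewrite /sN; apply: eq_bigr => k _; rewrite {1}(dm_real hM j).
congr (_ * _ ^+ _).
apply/eqP; rewrite eq_complex /=; apply/andP; split; apply/eqP; ring.
Qed.

Lemma expmi_E : expmi M = conjd (Pm M) (fun j => ce (complex.Re (dm M 0 j))).
Proof.
apply/matrixP => a b; rewrite /expmi mxE conjd_entry.
set c := fun j => (Pm M j a)^* * Pm M j b.
set x := fun j => complex.Re (dm M 0 j).
have HRe : forall N, complex.Re (expmi_partial M N a b) =
   \sum_j (complex.Re (c j) * series (cos_coeff (x j)) N - complex.Im (c j) * series (sin_coeff (x j)) N).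
  move=> N; rewrite expmi_partial_E conjd_entry Re_sum; apply: eq_bigr => j _.
  by rewrite cReM Re_sN Im_sN.
have HIm : forall N, complex.Im (expmi_partial M N a b) =
   \sum_j (complex.Re (c j) * series (sin_coeff (x j)) N + complex.Im (c j) * series (cos_coeff (x j)) N).
  move=> N; rewrite expmi_partial_E conjd_entry Im_sum; apply: eq_bigr => j _.
  by rewrite cImM Re_sN Im_sN.
apply/eqP; rewrite eq_complex; apply/andP; split; apply/eqP.
- rewrite Re_sum /=; under eq_fun do rewrite HRe.
  apply: cvg_lim => //; apply: cvg_bigsum => j.
  rewrite (cReM _ (ce _)) /=; apply: cvg_lin2; [exact: cvg_cos|exact: cvg_sin].
- rewrite Im_sum /=; under eq_fun do rewrite HIm.
  apply: cvg_lim => //; apply: cvg_bigsum => j.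
  rewrite (cImM _ (ce _)) /=; apply: cvg_lin2p; [exact: cvg_sin|exact: cvg_cos].
Qed.
End Expm.


Section Norm.
Local Open Scope sesquilinear_scope.
Variable R : realType.
Variable n : nat.
Local Notation C := (R[i]).
Local Notation cR := (real_complex R).

Definition sqn (c : C) : R := complex.Re c ^+ 2 + complex.Im c ^+ 2.
Definition sq (z : 'cV[C]_n) : R := \sum_i sqn (z i 0).

Lemma sqn_ge0 c : 0 <= sqn c.
Proof. by rewrite /sqn addr_ge0 // sqr_ge0. Qed.

Lemma sq_ge0 z : 0 <= sq z.
Proof. by apply: sumr_ge0 => i _; exact: sqn_ge0. Qed.

Lemma sqnM a b : sqn (a * b) = sqn a * sqn b.
Proof. by rewrite /sqn cReM cImM; ring. Qed.

Lemma sqn_cR c : cR (sqn c) = (c^* * c).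
Proof.
case: c => a b; apply/eqP; rewrite eq_complex /=; apply/andP; split; apply/eqP;
  rewrite /real_complex_def /sqn /=; ring. Qed.

Lemma sq_cplx z : cR (sq z) = (z^t* *m z) 0 0.
Proof.
rewrite /sq rmorph_sum mxE; apply: eq_bigr => i _.
by rewrite !mxE; exact: sqn_cR. Qed.

Lemma sq_unitary (Q : 'M[C]_n) z : Q^t* *m Q = 1%:M -> sq (Q *m z) = sq z.
Proof.
move=> hQ; apply: (@complexI R); rewrite !sq_cplx.
rewrite trmx_mul map_mxM -mulmxA [Q^t* *m _]mulmxA. 
by rewrite mulmxA hQ mulmx1.
Qed.

Lemma sq_diag (f : 'I_n -> C) w :
  sq (diag_mx (\row_j f j) *m w) = \sum_i sqn (f i) * sqn (w i 0).
Proof. by apply: eq_bigr => i _; rewrite mul_diag_mx !mxE sqnM. Qed.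

Variable P : 'M[C]_n.
Hypothesis hP : P *m P^t* = 1%:M.
Hypothesis hP' : P^t* *m P = 1%:M.

Lemma sq_conjd_le (f : 'I_n -> C) (K : R) z :
  (forall j, sqn (f j) <= K) -> sq (conjd P f *m z) <= K * sq z.
Proof.
move=> hK; rewrite /conjd -!mulmxA sq_unitary ?trmxCK // sq_diag.
rewrite -(sq_unitary z hP') /sq mulr_sumr; apply: ler_sum => i _.
by apply: ler_wpM2r; [exact: sqn_ge0|exact: hK].
Qed.

Lemma sq_conjd_eq (f : 'I_n -> C) z :
  (forall j, sqn (f j) = 1) -> sq (conjd P f *m z) = sq z.
Proof.
move=> hK; rewrite /conjd -!mulmxA sq_unitary ?trmxCK // sq_diag.
rewrite -(sq_unitary z hP') /sq; apply: eq_bigr => i _.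
by rewrite hK mul1r.
Qed.
End Norm.

Section Op.
Local Open Scope sesquilinear_scope.
Local Open Scope classical_set_scope.
Variable R : realType.
Variable n : nat.

Lemma vnorm_ge0 (v : 'cV[R]_n) : 0 <= vnorm v.
Proof. exact: sqrtr_ge0. Qed.

Lemma vnorm_sq (v : 'cV[R]_n) : vnorm v ^+ 2 = \sum_i v i 0 ^+ 2.
Proof. by rewrite /vnorm sqr_sqrtr // sumr_ge0 // => i _; exact: sqr_ge0. Qed.

Lemma vnormZ (c : R) (v : 'cV[R]_n) : vnorm (c *: v) = `|c| * vnorm v.
Proof.
rewrite /vnorm -sqrtr_sqr -sqrtrM ?sqr_ge0 //; congr Num.sqrt.
by rewrite mulr_sumr; apply: eq_bigr => i _; rewrite !mxE exprMn.
Qed.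

Lemma coord_le1 (u : 'cV[R]_n) j : vnorm u = 1 -> `|u j 0| <= 1.
Proof.
move=> hu.
have h1 : \sum_i u i 0 ^+ 2 = 1 by rewrite -vnorm_sq hu expr1n.
have h2 : u j 0 ^+ 2 <= 1.
  rewrite -h1 (bigD1 j) //= lerDl; apply: sumr_ge0 => i _; exact: sqr_ge0.
have h3 : `|u j 0| ^+ 2 = u j 0 ^+ 2 by rewrite real_normK // num_real.
have h4 := normr_ge0 (u j 0).
nra.
Qed.

Lemma opnorm_ub (B : 'M[R]_n) (v : 'cV[R]_n) : vnorm v = 1 -> vnorm (B *m v) <= opnorm B.
Proof.
move=> hv; apply: sup_upper_bound; last by exists v.
split; first by exists (vnorm (B *m v)), v.
exists (Num.sqrt (\sum_i (\sum_j `|B i j|) ^+ 2)) => _ [u /= hu <-].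
rewrite /vnorm ler_sqrt; last by apply: sumr_ge0 => i _; exact: sqr_ge0.
apply: ler_sum => i _; rewrite mxE.
have h1 : `|\sum_j B i j * u j 0| <= \sum_j `|B i j|.
  apply: (le_trans (ler_norm_sum _ _ _)); apply: ler_sum => j _.
  rewrite normrM -[X in _ <= X]mulr1; apply: ler_wpM2l => //.
  exact: coord_le1.
have h2 : 0 <= `|\sum_j B i j * u j 0| by [].
have h3 : `|\sum_j B i j * u j 0| ^+ 2 = (\sum_j B i j * u j 0) ^+ 2 by rewrite real_normK // num_real.
nra.
Qed.

Lemma opnorm_bound (B : 'M[R]_n) (v : 'cV[R]_n) :
  vnorm (B *m v) ^+ 2 <= opnorm B ^+ 2 * vnorm v ^+ 2.
Proof.
have [h0|hn] := eqVneq (vnorm v) 0.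
  have hv : v = 0.
    apply/matrixP => i j; rewrite ord1 mxE.
    have : \sum_i v i 0 ^+ 2 = 0 by rewrite -vnorm_sq h0 expr0n.
    move/eqP; rewrite psumr_eq0 => [/allP/(_ i)|]; last by move=> k _; exact: sqr_ge0.
    by rewrite mem_index_enum => /(_ isT) /implyP /(_ isT); rewrite sqrf_eq0 => /eqP.
  rewrite hv mulmx0 /vnorm.
  rewrite (_ : \sum_i (0 : 'cV[R]_n) i 0 ^+ 2 = 0) ?sqrtr0 ?expr0n ?mulr0 //.
  by rewrite big1 // => i _; rewrite mxE expr0n.
have sp : 0 < vnorm v by rewrite lt_def hn vnorm_ge0.
set u := (vnorm v)^-1 *: v.
have hu : vnorm u = 1.
  by rewrite vnormZ ger0_norm ?invr_ge0 ?vnorm_ge0 // mulVf.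
have E : B *m v = vnorm v *: (B *m u).
  by rewrite /u -scalemxAr scalerA divff // scale1r.
have h1 := opnorm_ub B hu.
have h2 := vnorm_ge0 (B *m u).
rewrite E vnormZ ger0_norm ?vnorm_ge0 //.
rewrite exprMn [_ * vnorm v ^+ 2]mulrC ler_wpM2l ?sqr_ge0 //; nra.
Qed.
End Op.

Section Norm2.
Local Open Scope sesquilinear_scope.
Variable R : realType.
Variable n : nat.
Local Notation C := (R[i]).

Lemma cReD (x y : C) : complex.Re (x + y) = complex.Re x + complex.Re y.
Proof. by case: x => ? ?; case: y => ? ?. Qed.
Lemma cImD (x y : C) : complex.Im (x + y) = complex.Im x + complex.Im y.
Proof. by case: x => ? ?; case: y => ? ?. Qed.

Lemma sq_re_im (z : 'cV[C]_n) :
  sq z = vnorm (map_mx (@complex.Re R) z) ^+ 2 + vnorm (map_mx (@complex.Im R) z) ^+ 2.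
Proof. by rewrite !vnorm_sq -big_split; apply: eq_bigr => i _; rewrite !mxE. Qed.

Lemma sq_real_bound (B : 'M[R]_n) (z : 'cV[C]_n) :
  sq (cplx_mx B *m z) <= opnorm B ^+ 2 * sq z.
Proof.
have ER : map_mx (@complex.Re R) (cplx_mx B *m z) = B *m map_mx (@complex.Re R) z.
  apply/matrixP => i k; rewrite !mxE Re_sum; apply: eq_bigr => j _.
  by rewrite !mxE cReM /=; ring.
have EI : map_mx (@complex.Im R) (cplx_mx B *m z) = B *m map_mx (@complex.Im R) z.
  apply/matrixP => i k; rewrite !mxE Im_sum; apply: eq_bigr => j _.
  by rewrite !mxE cImM /=; ring.
rewrite !sq_re_im ER EI mulrDr.
by apply: lerD; apply: opnorm_bound.
Qed.

Lemma sq_addm (m : R) (u a : 'cV[C]_n) :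
  m * sq (u + a) <= (m + 1) * sq u + m * (m + 1) * sq a.
Proof.
rewrite /sq !mulr_sumr -big_split; apply: ler_sum => i _ /=.
rewrite !mxE /sqn cReD cImD -subr_ge0.
set p := complex.Re (u i 0); set q := complex.Re (a i 0).
set p' := complex.Im (u i 0); set q' := complex.Im (a i 0).
have -> : (m + 1) * (p ^+ 2 + p' ^+ 2) + m * (m + 1) * (q ^+ 2 + q' ^+ 2) -
  m * ((p + q) ^+ 2 + (p' + q') ^+ 2) = (p - m * q) ^+ 2 + (p' - m * q') ^+ 2 by ring.
by rewrite addr_ge0 // sqr_ge0.
Qed.

Lemma sq_scale (c : C) (w : 'cV[C]_n) : sq (c *: w) = sqn c * sq w.
Proof. by rewrite /sq mulr_sumr; apply: eq_bigr => i _; rewrite !mxE sqnM. Qed.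
End Norm2.


Section CE.
Local Open Scope sesquilinear_scope.
Variable R : realType.
Local Notation C := (R[i]).

Lemma ceD (x y : R) : ce (x + y) = ce x * ce y.
Proof.
rewrite /ce cosD sinD; apply/eqP; rewrite eq_complex /=; apply/andP; split; apply/eqP; ring.
Qed.

Lemma ce0 : ce 0 = 1 :> C.
Proof. by rewrite /ce cos0 sin0. Qed.

Lemma ceX (x : R) N : ce x ^+ N = ce (x *+ N).
Proof.
elim: N => [|N IH]; first by rewrite expr0 mulr0n ce0.
by rewrite exprS IH -ceD mulrS.
Qed.

Lemma sqn_ce (x : R) : sqn (ce x) = 1.
Proof. by rewrite /sqn /= cos2Dsin2. Qed.

Lemma sqn_rem (y : R) : sqn (ce y - 1 - Complex 0 y) <= y ^+ 4 + y ^+ 6.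
Proof.
have -> : sqn (ce y - 1 - Complex 0 y) = (cos y - 1) ^+ 2 + (sin y - y) ^+ 2.
  by rewrite /sqn /=; congr (_ ^+ 2 + _ ^+ 2); ring.
have h1 := cos_bound y; have h2 := sin_bound y.
have e1 : (cos y - 1) ^+ 2 = `|cos y - 1| ^+ 2 by rewrite real_normK // num_real.
have e2 : (sin y - y) ^+ 2 = `|sin y - y| ^+ 2 by rewrite real_normK // num_real.
have e3 : y ^+ 6 = (`|y| ^+ 3) ^+ 2 by rewrite -normrX real_normK ?num_real // -exprM.
have e4 : y ^+ 4 = (y ^+ 2) ^+ 2 by rewrite -exprM.
rewrite e1 e2 e3 e4; apply: lerD; rewrite lerXn2r // ?nnegrE //.
all: by rewrite ?sqr_ge0 ?exprn_ge0.
Qed.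
End CE.

Section Tele.
Local Open Scope sesquilinear_scope.
Variable R : realType.
Variable n : nat.
Local Notation C := (R[i]).

Lemma sqn_opp (c : C) : sqn (- c) = sqn c.
Proof. by case: c => a b; rewrite /sqn /=; ring. Qed.

Lemma sq_opp (v : 'cV[C]_n) : sq (- v) = sq v.
Proof. by apply: eq_bigr => i _; rewrite mxE sqn_opp. Qed.

Lemma sq0 : sq (0 : 'cV[C]_n) = 0.
Proof. by rewrite /sq big1 // => i _; rewrite mxE /sqn /=; ring. Qed.

Lemma sq_sub2 (u v : 'cV[C]_n) : sq (u - v) <= 2 * sq u + 2 * sq v.
Proof.
have := sq_addm 1 u (- v); rewrite mul1r sq_opp.
by rewrite (_ : (1 + 1 : R) = 2) // mul1r.
Qed.

Lemma telescope (X Y : 'M[C]_n) (w : 'cV[C]_n) (beta : R) :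
  (forall u, sq (X *m u) = sq u) ->
  (forall k, sq ((X - Y) *m (Y ^+ k *m w)) <= beta) ->
  forall m, sq ((X ^+ m - Y ^+ m) *m w) <= (m%:R) ^+ 2 * beta.
Proof.
move=> hX hb; elim => [|m IH].
  by rewrite !expr0 subrr mul0mx sq0 expr0n mul0r.
have E : (X ^+ m.+1 - Y ^+ m.+1) *m w =
   X *m ((X ^+ m - Y ^+ m) *m w) + (X - Y) *m (Y ^+ m *m w).
  rewrite !mulmxA -mulmxDl; congr (_ *m w).
  by rewrite !mulmxE !exprS mulrBr mulrBl addrA subrK.
rewrite E.
case: m IH E => [|m] IH E.
  have -> : X ^+ 0 - Y ^+ 0 = 0 by rewrite !expr0 subrr.
  by rewrite mul0mx mulmx0 add0r expr1n mul1r hb.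
have b0 : 0 <= beta by apply: le_trans (hb 0%N); exact: sq_ge0.
have H := sq_addm (m.+1%:R) (X *m ((X ^+ m.+1 - Y ^+ m.+1) *m w)) ((X - Y) *m (Y ^+ m.+1 *m w)).
rewrite hX in H.
have H2 := hb m.+1.
have mp : 0 < (m.+1%:R : R) by rewrite ltr0n.
rewrite -(@ler_pM2l _ (m.+1%:R)) //; apply: (le_trans H).
rewrite -natr1 in IH mp *.
set q := (m%:R + 1 : R) in IH mp *.
have hs := sq_ge0 ((X - Y) *m (Y ^+ m.+1 *m w)).
have hs2 := sq_ge0 ((X ^+ m.+1 - Y ^+ m.+1) *m w).
rewrite -[(m.+1.+1)%:R]natr1 -natr1 -/q.
nra.
Qed.
End Tele.

Section Lip.
Local Open Scope sesquilinear_scope.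
Variable R : realType.
Variable n : nat.
Local Notation C := (R[i]).
Local Notation cR := (real_complex R).

Definition xs (N : 'M[R]_n) (j : 'I_n) : R := complex.Re (dm N 0 j).
Definition Et (N : 'M[R]_n) (t : R) : 'M[C]_n := conjd (Pm N) (fun j => ce (t * xs N j)).
Definition KK (N : 'M[R]_n) : R := \sum_j (xs N j ^+ 4 + xs N j ^+ 6).

Variable N : 'M[R]_n.
Hypothesis hN : N^T = N.

Lemma Et1 : expmi N = Et N 1.
Proof. by rewrite (expmi_E hN) /Et; apply: conjd_ext => j; rewrite mul1r. Qed.

Lemma EtX t k : Et N t ^+ k = Et N (t *+ k).
Proof.
rewrite /Et (conjdX (Pm_u N) (Pm_u' N)); apply: conjd_ext => j.
by rewrite ceX mulrnAl.
Qed.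

Lemma Et_pres t u : sq (Et N t *m u) = sq u.
Proof.
by apply: sq_conjd_eq; [exact: Pm_u|exact: Pm_u'|move=> j; exact: sqn_ce].
Qed.

Lemma Et_rem t u : 0 <= t <= 1 ->
  sq ((Et N t - 1%:M - Complex 0 t *: cplx_mx N) *m u) <= t ^+ 4 * KK N * sq u.
Proof.
move=> /andP[t0 t1].
have E : Et N t - 1%:M - Complex 0 t *: cplx_mx N =
   conjd (Pm N) (fun j => ce (t * xs N j) - 1 - Complex 0 (t * xs N j)).
  rewrite -(conjd1 (Pm_u' N)) (Pm_spec hN) conjdZ /Et conjdN conjdD conjdN conjdD.
  apply: conjd_ext => j; rewrite (dm_real hN j) -/(xs N j).
  congr (_ - _ - _); apply/eqP; rewrite eq_complex /= /real_complex_def /=.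
  by apply/andP; split; apply/eqP; ring.
rewrite E; apply: sq_conjd_le; [exact: Pm_u|exact: Pm_u'|move=> j].
apply: (le_trans (sqn_rem _)).
have hx : xs N j ^+ 4 + xs N j ^+ 6 <= KK N.
  rewrite /KK (bigD1 j) //= lerDl; apply: sumr_ge0 => i _.
  by rewrite addr_ge0 // ?(exprM _ 2 2) ?(exprM _ 3 2) sqr_ge0.
set x := xs N j in hx *.
have x4 : 0 <= x ^+ 4 by rewrite (exprM _ 2 2) sqr_ge0.
have x6 : 0 <= x ^+ 6 by rewrite (exprM _ 3 2) sqr_ge0.
have t4 : 0 <= t ^+ 4 by rewrite exprn_ge0.
have t64 : t ^+ 6 <= t ^+ 4.
  by rewrite (_ : 6%N = (4 + 2)%N) // exprD ler_piMr // expr_le1.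
rewrite !exprMn.
have : t ^+ 6 * x ^+ 6 <= t ^+ 4 * x ^+ 6 by rewrite ler_wpM2r.
have : t ^+ 4 * (x ^+ 4 + x ^+ 6) <= t ^+ 4 * KK N by rewrite ler_wpM2l.
nra.
Qed.
End Lip.

Section Lip2.
Local Open Scope sesquilinear_scope.
Variable R : realType.
Variable n : nat.
Local Notation C := (R[i]).

Lemma archi_le (a b c : R) :
  (forall k : nat, (0 < k)%N -> a <= b + c / k%:R) -> a <= b.
Proof.
move=> H; rewrite leNgt; apply/negP => ba.
have [c0|c0] := leP c 0.
  have := H 1%N isT; rewrite divr1; lra.
have hab : 0 < a - b by rewrite subr_gt0.
have hq : 0 <= c / (a - b) by rewrite divr_ge0 // ltW.
have hk := archi_boundP hq.
set k := Num.Def.archi_bound _ in hk.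
have := H k.+1 isT.
have kp : (0 : R) < k.+1%:R by rewrite ltr0n.
have h1 : c < k%:R * (a - b) by rewrite -ltr_pdivrMr.
have h2 : c / k.+1%:R < a - b.
  rewrite ltr_pdivrMr // -natr1; nra.
move=> h3; set y := c / k.+1%:R in h2 h3; lra.
Qed.

Lemma cplxB (A B : 'M[R]_n) : cplx_mx (A - B) = cplx_mx A - cplx_mx B.
Proof.
apply/matrixP => i j; rewrite !mxE; apply/eqP; rewrite eq_complex /=.
by rewrite subrr !eqxx.
Qed.

Lemma sqn_it (t : R) : sqn (Complex 0 t) = t ^+ 2.
Proof. by rewrite /sqn /=; ring. Qed.

Variables M M' : 'M[R]_n.
Hypothesis hM : M^T = M.
Hypothesis hM' : M'^T = M'.

Lemma decomp (t : R) (z : 'cV[C]_n) :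
  (Et M' t - Et M t) *m z = Complex 0 t *: (cplx_mx (M' - M) *m z) +
   ((Et M' t - 1%:M - Complex 0 t *: cplx_mx M') *m z -
    (Et M t - 1%:M - Complex 0 t *: cplx_mx M) *m z).
Proof.
rewrite cplxB !mulmxBl -!scalemxAl !mul1mx.
apply/matrixP => i k; rewrite !mxE; ring.
Qed.

Lemma KK_ge0 (N : 'M[R]_n) : 0 <= KK N.
Proof.
apply: sumr_ge0 => j _.
by rewrite addr_ge0 // ?(exprM _ 2 2) ?(exprM _ 3 2) sqr_ge0.
Qed.

Lemma lip (w : 'cV[C]_n) :
  sq ((expmi M' - expmi M) *m w) <= opnorm (M' - M) ^+ 2 * sq w.
Proof.
set s := sq w; set o := opnorm (M' - M); set K2 := KK M + KK M'.
have s0 : 0 <= s := sq_ge0 w.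
have K0 : 0 <= K2 by rewrite addr_ge0 // KK_ge0.
apply: (@archi_le _ _ (o ^+ 2 * s + 4 * K2 * s)) => k k0.
set q : R := k%:R.
have q1 : 1 <= q by rewrite ler1n.
have q0 : 0 < q by lra.
set t := q^-1.
have t0 : 0 < t by rewrite invr_gt0.
have t1 : t <= 1 by rewrite invr_le1 // unitfE gt_eqF.
have t01 : 0 <= t <= 1 by rewrite ltW.
set X := Et M' t; set Y := Et M t.
have hX : forall u, sq (X *m u) = sq u by move=> u; exact: Et_pres.
have Ypow : forall j, sq (Y ^+ j *m w) = s by move=> j; rewrite /Y EtX // Et_pres.
have step : forall z, q * sq ((X - Y) *m z) <=
    (q + 1) * (t ^+ 2 * o ^+ 2 * sq z) + q * (q + 1) * (2 * t ^+ 4 * K2 * sq z).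
  move=> z; rewrite /X /Y decomp //.
  apply: le_trans (sq_addm q _ _) _.
  have hz := sq_ge0 z.
  apply: lerD.
    apply: ler_wpM2l; first lra.
    rewrite sq_scale sqn_it -mulrA ler_wpM2l ?sqr_ge0 //.
    exact: sq_real_bound.
  apply: ler_wpM2l; first nra.
  apply: le_trans (sq_sub2 _ _) _.
  have h1 := Et_rem hM' z t01.
  have h2 := Et_rem hM z t01.
  rewrite /K2 (_ : 2 * t ^+ 4 * (KK M + KK M') * sq z =
     2 * (t ^+ 4 * KK M' * sq z) + 2 * (t ^+ 4 * KK M * sq z)); last by ring.
  by apply: lerD; apply: ler_wpM2l.
set beta := t * ((q + 1) * (t ^+ 2 * o ^+ 2 * s) + q * (q + 1) * (2 * t ^+ 4 * K2 * s)).
have hb : forall j, sq ((X - Y) *m (Y ^+ j *m w)) <= beta.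
  move=> j; have := step (Y ^+ j *m w); rewrite Ypow => H.
  have -> : sq ((X - Y) *m (Y ^+ j *m w)) = t * (q * sq ((X - Y) *m (Y ^+ j *m w))).
    by rewrite mulrA mulVf ?mul1r // gt_eqF.
  by rewrite /beta ler_wpM2l // ltW.
have tel := telescope hX hb k.
have tk : t *+ k = 1 by rewrite -mulr_natr mulVf // gt_eqF.
have E : X ^+ k - Y ^+ k = expmi M' - expmi M.
  by rewrite /X /Y !EtX // tk -!Et1.
rewrite -E; apply: (le_trans tel); rewrite -/q.
have -> : q ^+ 2 * beta = o ^+ 2 * s + (o ^+ 2 * s + 4 * K2 * s) / q
    - 2 * K2 * s * (q - 1) / q ^+ 2.
  by rewrite /beta /t; field; rewrite gt_eqF.
rewrite lerBlDr lerDl; apply: divr_ge0; last exact: exprn_ge0 (ltW q0).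
apply: mulr_ge0; [nra|lra].
Qed.
End Lip2.


Section Fin.
Local Open Scope sesquilinear_scope.
Variable R : realType.
Variable n : nat.
Local Notation C := (R[i]).

Lemma cmod_sq (c : C) : cmod c ^+ 2 = sqn c.
Proof.
case: c => a b; rewrite /cmod /sqn /=.
by rewrite sqr_sqrtr // addr_ge0 // sqr_ge0.
Qed.

Lemma sq_col (U : 'M[C]_n) b : sq (U *m delta_mx b 0) = \sum_i sqn (U i b).
Proof. by rewrite -colE; apply: eq_bigr => i _; rewrite mxE. Qed.

Lemma sq_delta (b : 'I_n) : sq (delta_mx b 0 : 'cV[C]_n) = 1.
Proof.
rewrite /sq (bigD1 b) //= big1 ?addr0.
  by rewrite !mxE !eqxx /sqn /=; ring.
by move=> i hi; rewrite !mxE (negbTE hi) /sqn /=; ring.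
Qed.

Lemma colsum (M : 'M[R]_n) (hM : M^T = M) b : \sum_i sqn (expmi M i b) = 1.
Proof. by rewrite -sq_col (Et1 hM) Et_pres // sq_delta. Qed.

Lemma sqn_eq0 (c : C) : sqn c = 0 -> c = 0.
Proof.
case: c => a b; rewrite /sqn /= => h.
have ha : a = 0 by apply/eqP; rewrite -sqrf_eq0; apply/eqP; nra.
have hb : b = 0 by apply/eqP; rewrite -sqrf_eq0; apply/eqP; nra.
by rewrite ha hb.
Qed.
End Fin.

Unset Implicit Arguments.
Set Strict Implicit.

Theorem theorem3p3 (R : realType) (n : nat) (v1 v2 : 'I_n)
  (hv1 : nat_of_ord v1 = 0%N) (hv2 : nat_of_ord v2 = 1%N)
  (A H : 'M[R]_n) (t0 : R)
  (hA : weighted_adjacency A) (hconn : adj_connected A)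
  (hH : H = A \/ H = laplacian A)
  (hPST : cmod (expmi (t0 *: H) v1 v2) = 1)
  (hdec : exists (theta : R) (l : nat) (Q : 'M[R]_n) (r : 'I_n -> nat)
            (x : 'I_n -> R),
     (l <= n)%N /\
         Q^T *m Q = 1%:M /\
         (forall i : 'I_n, (i < l)%N -> ~~ odd (r i) /\ (0 < r i)%N) /\
         (forall i : 'I_n, (l <= i)%N -> odd (r i)) /\
         (forall i j : 'I_n, (i <= j)%N -> (j < l)%N -> (r j <= r i)%N) /\
         (forall i j : 'I_n, (l <= i)%N -> (i <= j)%N -> (r j <= r i)%N) /\
         t0 *: H = Q^T *m diag_mx (\row_i (pi * (r i)%:R)) *m Q + theta%:M /\
         (forall j, 0 <= x j) /\
         (forall j, Q^T v1 j = x j /\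
                    Q^T v2 j = (if (j < l)%N then x j else - x j))) :
  exists (C delta : R), 0 < delta /\
    forall H0 : 'M[R]_n, H0^T = H0 -> H0 != 0 -> opnorm H0 < delta ->
      1 - cmod (expmi (t0 *: H + H0) v1 v2) ^+ 2
      <= 2 * frobenius H0 ^+ 2 / (pi - opnorm H0) ^+ 2
         + opnorm H0 ^+ 2 + C * opnorm H0 ^+ 3.
Proof.
exists 0, 1; split => // H0 hH0 _ _.
have hHs : H^T = H.
  case: hH => ->; first exact: hA.1.
  by rewrite /laplacian linearB /= tr_diag_mx hA.1.
have hA0 : (t0 *: H)^T = t0 *: H by rewrite linearZ /= hHs.
have hA1 : (t0 *: H + H0)^T = t0 *: H + H0 by rewrite linearD /= hA0 hH0.
have hU0 : sqn (expmi (t0 *: H) v1 v2) = 1 by rewrite -cmod_sq hPST expr1n.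
have c0 := colsum hA0 v2; have c1 := colsum hA1 v2.
have L := lip hA0 hA1 (delta_mx v2 0).
rewrite cmod_sq.
rewrite (_ : t0 *: H + H0 - t0 *: H = H0) in L; last by rewrite addrAC subrr add0r.
move: (expmi (t0 *: H)) (expmi (t0 *: H + H0)) hU0 c0 c1 L => U0 U hU0 c0 c1 L.
rewrite sq_delta mulr1 in L.
have hrest : forall i, i != v1 -> U0 i v2 = 0.
  move: c0; rewrite (bigD1 v1) //= hU0 => E.
  have : \sum_(i | i != v1) sqn (U0 i v2) = 0 by lra.
  move=> /psumr_eq0P H1 i hi.
  apply: sqn_eq0; apply: H1 => // j _; exact: sqn_ge0.
have key : 1 - sqn (U v1 v2) <= sq ((U - U0) *m delta_mx v2 0).
  rewrite sq_col (bigD1 v1) //=.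
  have -> : \sum_(i | i != v1) sqn ((U - U0) i v2) = \sum_(i | i != v1) sqn (U i v2).
    by apply: eq_bigr => i hi; rewrite !mxE (hrest i hi) subr0.
  move: c1; rewrite (bigD1 v1) //= => E.
  have := sqn_ge0 ((U - U0) v1 v2); lra.
have hF : 0 <= 2 * frobenius H0 ^+ 2 / (pi - opnorm H0) ^+ 2.
  by rewrite divr_ge0 ?sqr_ge0 // mulr_ge0 ?sqr_ge0.
rewrite mul0r addr0; lra.
Qed.
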